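(* Let $R$ be a $G$-category and $P\colon R\to R/G$ the canonical functor. Then the pushdown $(P_\bullet,\phi_\bullet)\colon\operatorname{mod}R\to\operatorname{mod}R/G$ is a $G$-precovering, where $\operatorname{mod}R$ carries the $G$-action $X\mapsto{}^\alpha X$.
   Context: $\Bbbk$ is a commutative ring; all categories and functors are $\Bbbk$-linear; $G$ is a group. A $G$-category is a category $\mathcal C$ with a group homomorphism $G\to\operatorname{Aut}(\mathcal C)$, $\alpha\mapsto A_\alpha$, written $\alpha x,\alpha f$. For a $G$-invariant functor $(F,\phi)$ (natural isos $\phi_\alpha\colon F\to FA_\alpha$ with $\phi_1=\mathrm{id}$, $(\phi_\beta A_\alpha)\phi_\alpha=\phi_{\beta\alpha}$), it is a $G$-precovering if each $F^{(1)}_{x,y}\colon\bigoplus_\alpha\mathcal C(\alpha x,y)\to\mathcal C'(Fx,Fy)$, $(f_\alpha)\mapsto\sum F(f_\alpha)\phi_{\alpha,x}$, is bijective. $\operatorname{Mod}R$ is the category of contravariant $\Bbbk$-linear functors $R\to\operatorname{Mod}\Bbbk$; $\operatorname{mod}R$ is its full subcategory of finitely generated modules (quotients of finite direct sums of representables $R(-,x)$). $G$ acts on $\operatorname{Mod}R$ (and on $\operatorname{mod}R$) by ${}^\alpha X:=X\circ A_{\alpha^{-1}}$, ${}^\alpha u:=uA_{\alpha^{-1}}$. $R/G$: objects of $R$; morphisms $x\to y$ are row- and column-finite families $f=(f_{\beta,\alpha})_{(\alpha,\beta)\in G\times G}$ with $f_{\beta,\alpha}\in R(\alpha x,\beta y)$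 and $f_{\gamma\beta,\gamma\alpha}=\gamma(f_{\beta,\alpha})$; composition $(gf)_{\beta,\alpha}=\sum_\gamma g_{\beta,\gamma}f_{\gamma,\alpha}$. $Px=x$, $P(f)=(\delta_{\alpha,\beta}\alpha f)$. Pushdown: for $X\in\operatorname{Mod}R$, $(P_\bullet X)(x)=\bigoplus_{\alpha\in G}X(\alpha x)$, and for $f\colon x\to y$ in $R/G$, $(P_\bullet X)(f)\colon\bigoplus_\beta X(\beta y)\to\bigoplus_\alpha X(\alpha x)$ is the matrix with $(\alpha,\beta)$-entry $X(f_{\beta,\alpha})$; for $u\colon X\to X'$, $(P_\bullet u)_x=\bigoplus_\alpha u_{\alpha x}$. ($P_\bullet$ is left adjoint to $Y\mapsto Y\circ P$ and maps $\operatorname{mod}R$ into $\operatorname{mod}R/G$.) Its invariance adjuster: $(\phi_\bullet)_{\mu,X,x}\colon\bigoplus_\alpha X(\alpha x)\to(P_\bullet{}^\mu X)(x)=\bigoplus_\beta X(\mu^{-1}\beta x)$ maps the summand indexed by $\alpha$ identically onto the summand indexed by $\beta=\mu\alpha$. *)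

(* Defs.v *)
From HB Require Import structures.
From mathcomp Require Import all_boot all_algebra.
From Stdlib Require List.

Set Implicit Arguments.
Unset Strict Implicit.
Unset Printing Implicit Defensive.

Import GRing.Theory.
Local Open Scope ring_scope.

Record group := Group {
  gcar :> Type;
  gmul : gcar -> gcar -> gcar;
  gone : gcar;
  ginv : gcar -> gcar;
  gmulA : forall a b c, gmul a (gmul b c) = gmul (gmul a b) c;
  gmul1l : forall a, gmul gone a = a;
  gmulVl : forall a, gmul (ginv a) a = gone }.
Arguments gmul {g}.
Arguments gone {g}.
Arguments ginv {g}.

Definition castT (O : Type) (P : O -> Type) (a b : O) (e : a = b) (p : P a) : P b :=
  eq_rect a P p b e.
Arguments castT {O} P {a b} e p.

Definition castHom (O : Type) (H : O -> O -> Type) (x x' y y' : O)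
    (e1 : x = x') (e2 : y = y') (f : H x y) : H x' y' :=
  castT (fun a => H a y') e1 (castT (fun b => H x b) e2 f).
Arguments castHom {O} H {x x' y y'} e1 e2 f.

Definition FinSum (I : Type) (V : nmodType) (t : I -> V) (v : V) : Prop :=
  exists s : list I, List.NoDup s /\ (forall i, ~ List.In i s -> t i = 0)
                     /\ v = \sum_(i <- s) t i.

Definition DS (k : comPzRingType) (I : Type) (M : I -> lmodType k) :=
  {v : forall i, M i | exists s : list I, forall i, ~ List.In i s -> v i = 0}.

Record kcat (k : comPzRingType) := KCat {
  Obj : Type;
  Hom : Obj -> Obj -> lmodType k;
  idm : forall x, Hom x x;
  comp : forall x y z, Hom y z -> Hom x y -> Hom x z }.
Arguments Obj {k} _.
Arguments Hom {k} _ _ _.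
Arguments idm {k _} _.
Arguments comp {k _ _ _ _} _ _.

Definition is_kcat (k : comPzRingType) (C : kcat k) : Prop :=
  [/\ (forall x y z w (h : Hom C z w) (g : Hom C y z) (f : Hom C x y),
         comp h (comp g f) = comp (comp h g) f),
      (forall x y (f : Hom C x y), comp (idm y) f = f),
      (forall x y (f : Hom C x y), comp f (idm x) = f),
      (forall x y z (a : k) (g g' : Hom C y z) (f : Hom C x y),
         comp (a *: g + g') f = a *: comp g f + comp g' f) &
      (forall x y z (a : k) (g : Hom C y z) (f f' : Hom C x y),
         comp g (a *: f + f') = a *: comp g f + comp g f')].

(* alpha |-> A_alpha : act alpha on objects, amap alpha on morphisms *)
Record Gaction (k : comPzRingType) (G : group) (C : kcat k) := GAction {
  act : G -> Obj C -> Obj C;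
  amap : forall (al : G) x y, Hom C x y -> Hom C (act al x) (act al y) }.
Arguments act {k G C} _ _ _.
Arguments amap {k G C} _ _ {_ _} _.

Definition is_Gaction (k : comPzRingType) (G : group) (C : kcat k)
    (A : Gaction G C)
    (actM : forall (al be : G) x, act A be (act A al x) = act A (gmul be al) x) : Prop :=
  [/\ (forall al x y (a : k) (f f' : Hom C x y),
         amap A al (a *: f + f') = a *: amap A al f + amap A al f'),
      (forall al x, amap A al (idm x) = idm (act A al x)),
      (forall al x y z (g : Hom C y z) (f : Hom C x y),
         amap A al (comp g f) = comp (amap A al g) (amap A al f)),
      exists act1 : forall x, act A gone x = x,
        forall x y (f : Hom C x y),
          amap A gone f = castHom (Hom C) (esym (act1 x)) (esym (act1 y)) f &
      forall (al be : G) x y (f : Hom C x y),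
          amap A be (amap A al f)
          = castHom (Hom C) (esym (actM al be x)) (esym (actM al be y))
                    (amap A (gmul be al) f)].

(* The object-level law A_beta A_alpha = A_(beta alpha) is the (propositional)
   hypothesis actM, needed for transports; any proof will do. *)

(* ---------- (right) modules: contravariant k-linear functors C -> Mod k ---------- *)
Record rmod (k : comPzRingType) (C : kcat k) := RMod {
  mob : Obj C -> lmodType k;
  mmap : forall x y, Hom C x y -> mob y -> mob x }.
Arguments mob {k C} _ _.
Arguments mmap {k C} _ {_ _} _ _.

Definition is_rmod (k : comPzRingType) (C : kcat k) (M : rmod C) : Prop :=
  [/\ (forall x y (f : Hom C x y) (a : k) (v w : mob M y),
         mmap M f (a *: v + w) = a *: mmap M f v + mmap M f w),
      (forall x y (a : k) (f f' : Hom C x y) (v : mob M y),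
         mmap M (a *: f + f') v = a *: mmap M f v + mmap M f' v),
      (forall x (v : mob M x), mmap M (idm x) v = v) &
      (forall x y z (g : Hom C y z) (f : Hom C x y) (v : mob M z),
         mmap M (comp g f) v = mmap M f (mmap M g v))].

(* finitely generated: a quotient of a finite direct sum of representables
   (+)_{i<n} C(-, x_i); by Yoneda such an epimorphism is given by elements
   e_i in M(x_i) such that every element of every M(z) is of the form
   sum_i M(f_i)(e_i) with f_i : z -> x_i. *)
Definition fg (k : comPzRingType) (C : kcat k) (M : rmod C) : Prop :=
  exists (n : nat) (xs : 'I_n -> Obj C) (e : forall i, mob M (xs i)),
    forall z (v : mob M z),
      exists fs : forall i, Hom C z (xs i), v = \sum_(i < n) mmap M (fs i) (e i).

Definition is_nat (k : comPzRingType) (C : kcat k) (M N : rmod C)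
    (u : forall z, mob M z -> mob N z) : Prop :=
  (forall z (a : k) (v w : mob M z), u z (a *: v + w) = a *: u z v + u z w) /\
  (forall x y (f : Hom C x y) (v : mob M y), u x (mmap M f v) = mmap N f (u y v)).

Arguments is_nat {k C} M N u.
Arguments is_kcat {k} C.
Arguments is_Gaction {k G C} A actM.
Arguments is_rmod {k C} M.
Arguments fg {k C} M.

(* the G-action on Mod C: ^alpha M := M o A_(alpha^-1) *)
Definition twist (k : comPzRingType) (G : group) (C : kcat k) (A : Gaction G C)
    (al : G) (M : rmod C) : rmod C :=
  @RMod k C (fun z => mob M (act A (ginv al) z))
            (fun x y f => mmap M (amap A (ginv al) f)).
Arguments twist {k G C} A al M.

Unset Implicit Arguments.
Section Orbit.
Variables (k : comPzRingType) (G : group) (C : kcat k) (A : Gaction G C).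
Variable actM : forall (al be : G) x, act A be (act A al x) = act A (gmul be al) x.

(* morphisms x -> y of the orbit category C/G: families
   f al be = f_{be,al} in C(al x, be y), row- and column-finite, with
   f_{ga be, ga al} = ga (f_{be,al}). *)
Definition rg_hom (x y : Obj C) :=
  {f : forall al be : G, Hom C (act A al x) (act A be y) |
    [/\ (forall be : G, exists s : list G, forall al, ~ List.In al s -> f al be = 0),
        (forall al : G, exists s : list G, forall be, ~ List.In be s -> f al be = 0) &
        (forall ga al be : G,
           f (gmul ga al) (gmul ga be)
           = castHom (Hom C) (actM al ga x) (actM be ga y) (amap A ga (f al be)))]}.

(* underlying modules of the pushdown: (P. M)(x) = (+)_ga M(ga x) *)
Definition PD (M : rmod C) (x : Obj C) := DS (fun ga : G => mob M (act A ga x)).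

(* u = (u_x)_x is a morphism P.X -> P.Y in Mod C/G, where
   (P.M)(f) has matrix entries M(f_{be,al}) *)
Definition is_nat_PD (X Y : rmod C) (u : forall x, PD X x -> PD Y x) : Prop :=
  (forall x (a : k) (v w z : PD X x),
     (forall ga, sval z ga = a *: sval v ga + sval w ga) ->
     forall ga, sval (u x z) ga = a *: sval (u x v) ga + sval (u x w) ga) /\
  (forall x y (f : rg_hom x y) (v : PD X y) (w : PD X x),
     (forall al, FinSum (fun be => mmap X (sval f al be) (sval v be)) (sval w al)) ->
     forall al, FinSum (fun be => mmap Y (sval f al be) (sval (u y v) be))
                       (sval (u x w) al)).

(* elements of  (+)_mu Hom_{mod C}(^mu X, Y) *)
Definition in_dsum_hom (X Y : rmod C)
    (f : forall mu : G, forall z, mob (twist A mu X) z -> mob Y z) : Prop :=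
  (forall mu, is_nat (twist A mu X) Y (f mu)) /\
  (exists s : list G, forall mu, ~ List.In mu s -> forall z w, f mu z w = 0).

(* [F1rel f u]: u = F^(1)_{X,Y}(f) = sum_mu P.(f_mu) o (phi.)_{mu,X}, i.e.
   u_x(v)_be = sum_mu (f_mu)_{be x}(v_{mu^-1 be}), where (phi.)_{mu,X,x}
   sends the summand ga identically onto the summand mu ga. *)
Definition F1rel (X Y : rmod C)
    (f : forall mu : G, forall z, mob (twist A mu X) z -> mob Y z)
    (u : forall x, PD X x -> PD Y x) : Prop :=
  forall x (v : PD X x) (be : G),
    FinSum (fun mu : G =>
              f mu (act A be x)
                (castT (mob X) (esym (actM be (ginv mu) x))
                       (sval v (gmul (ginv mu) be))))
           (sval (u x v) be).

(* F^(1)_{X,Y} is a well-defined bijection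
   (+)_mu Hom(^mu X, Y) -> Hom_{mod C/G}(P.X, P.Y) *)
Definition F1_bijective (X Y : rmod C) : Prop :=
  [/\ (forall f, in_dsum_hom X Y f -> exists u, is_nat_PD X Y u /\ F1rel X Y f u),
      (forall u, is_nat_PD X Y u -> exists f, in_dsum_hom X Y f /\ F1rel X Y f u) &
      (forall f g u, in_dsum_hom X Y f -> in_dsum_hom X Y g ->
         F1rel X Y f u -> F1rel X Y g u -> forall mu z w, f mu z w = g mu z w)].
End Orbit.
Arguments rg_hom {k G C A} actM x y.
Arguments PD {k G C} A M x.
Arguments is_nat_PD {k G C A} actM X Y u.
Arguments in_dsum_hom {k G C} A X Y f.
Arguments F1rel {k G C A} actM X Y f u.
Arguments F1_bijective {k G C A} actM X Y.

(* Main.v *)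
From Pilot Require Import Defs.
From mathcomp Require Import all_boot all_algebra.
From Stdlib Require Import Classical ClassicalEpsilon FunctionalExtensionality ProofIrrelevance.
Import Pilot.Defs.

Set Implicit Arguments.
Unset Strict Implicit.
Unset Printing Implicit Defensive.
Import GRing.Theory.
Local Open Scope ring_scope.

Lemma In_smap (A B : Type) (f : A -> B) (l : seq A) y :
  List.In y (map f l) <-> exists x, List.In x l /\ f x = y.
Proof.
elim: l => [|a l IH] /=; first by split=> // -[x []].
split.
- case=> [<-|Hy]; first by exists a; auto.
  have [x [Hx <-]] := proj1 IH Hy; by exists x; auto.
- case=> x [[<-|Hx] E]; first by left.
  by right; apply: (proj2 IH); exists x.
Qed.

Lemma NoDup_smap (A B : Type) (f : A -> B) (l : seq A) :
  (forall a b, f a = f b -> a = b) -> List.NoDup l -> List.NoDup (map f l).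
Proof.
move=> inj; elim: l => [|a l IH] /= ND; first by constructor.
inversion ND; subst; constructor; last by apply: IH.
move/In_smap=> [x [Hx /inj E]]; by subst.
Qed.

Lemma In_mem (T : eqType) (x : T) (s : seq T) : (x \in s) -> List.In x s.
Proof.
elim: s => [|a s IH] //=; rewrite in_cons => /orP [/eqP ->|/IH]; auto.
Qed.

Lemma nodup_exists (A : Type) (s : seq A) :
  exists s0 : seq A, List.NoDup s0 /\ (forall i, List.In i s <-> List.In i s0).
Proof.
elim: s => [|a s [s0 [ND H]]]; first by exists [::]; split=> //; constructor.
case: (classic (List.In a s0)) => Ha.
- exists s0; split=> // i /=; split; first by case=> [<-|/H]//.
  by move=> /H; auto.
- exists (a :: s0); split; first by constructor.
  by move=> i /=; rewrite H.
Qed.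

Lemma geqd (A : Type) (a b : A) : {a = b} + {a <> b}.
Proof. exact: excluded_middle_informative. Qed.

Section Sums.
Variables (I : Type) (V : nmodType).

Lemma sum_ext_In (s : seq I) (t t' : I -> V) :
  (forall i, List.In i s -> t i = t' i) -> \sum_(i <- s) t i = \sum_(i <- s) t' i.
Proof.
elim: s => [|a s IH] H; first by rewrite !big_nil.
rewrite !big_cons H /=; last by left.
by rewrite IH // => i Hi; apply: H; right.
Qed.

Lemma sum_zero_In (s : seq I) (t : I -> V) :
  (forall i, List.In i s -> t i = 0) -> \sum_(i <- s) t i = 0.
Proof.
move=> H; rewrite (sum_ext_In (t' := fun _ => 0)) //.
by rewrite big1.
Qed.

Lemma sum_uniq_support (s s' : seq I) (t : I -> V) :
  List.NoDup s -> List.NoDup s' ->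
  (forall i, ~ List.In i s -> t i = 0) -> (forall i, ~ List.In i s' -> t i = 0) ->
  \sum_(i <- s) t i = \sum_(i <- s') t i.
Proof.
elim: s s' t => [|a s IH] s' t ND ND' H H'.
- rewrite big_nil; symmetry; apply: sum_zero_In => i _; apply: H; by [].
- inversion ND; subst.
  case: (classic (List.In a s')) => Ha.
  + have [l1 [l2 E]] := List.in_split _ _ Ha; subst s'.
    rewrite big_cons big_cat big_cons /= addrCA -big_cat /=; congr (_ + _).
    have ND2 : List.NoDup (l1 ++ l2) by exact: List.NoDup_remove_1 ND'.
    have Hna : ~ List.In a (l1 ++ l2) by exact: List.NoDup_remove_2 ND'.
    pose t' := fun i => if geqd i a then 0 else t i.
    rewrite (sum_ext_In (t' := t')); last first.
      by move=> i Hi; rewrite /t'; case: geqd => // E; subst.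
    rewrite [RHS](sum_ext_In (t' := t')); last first.
      by move=> i Hi; rewrite /t'; case: geqd => // E; subst.
    apply: IH => // i Hi; rewrite /t'; case: geqd => // ne.
    * apply: H; move=> [E|Hs]; [by apply: ne | by apply: Hi].
    * apply: H'; move=> Hin; case: (List.in_app_or _ _ _ Hin) => [Hi1|[E|Hi2]].
      - by apply: Hi; apply: List.in_or_app; left.
      - by apply: ne.
      - by apply: Hi; apply: List.in_or_app; right.
  + rewrite big_cons (H' a Ha) add0r; apply: IH => // i Hi.
    case: (geqd i a) => [->|ne]; first exact: H' a Ha.
    apply: H; move=> [E|Hs]; [by apply: ne | by apply: Hi].
Qed.

Lemma FinSum_unique (t : I -> V) v v' : FinSum t v -> FinSum t v' -> v = v'.
Proof.
move=> [s [ND [H ->]]] [s' [ND' [H' ->]]]; exact: sum_uniq_support.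
Qed.

Lemma FinSum_single (t : I -> V) mu :
  (forall i, i <> mu -> t i = 0) -> FinSum t (t mu).
Proof.
move=> H; exists [:: mu]; split; first by constructor => //; constructor.
split; last by rewrite big_cons big_nil addr0.
by move=> i /= Hi; apply: H => E; apply: Hi; left.
Qed.

Lemma FinSum_single_eq (t : I -> V) mu v :
  (forall i, i <> mu -> t i = 0) -> FinSum t v -> v = t mu.
Proof. move=> H Hv; exact: (FinSum_unique Hv (FinSum_single H)). Qed.

Lemma FinSum_eq (t t' : I -> V) v v' :
  (forall i, t i = t' i) -> v = v' -> FinSum t v -> FinSum t' v'.
Proof.
move=> Ht <- [s [ND [H E]]]; exists s; split=> //; split.
  by move=> i Hi; rewrite -Ht; apply: H.
by rewrite E; apply: eq_bigr.
Qed.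
End Sums.

Lemma castT_pi (O : Type) (P : O -> Type) (a b : O) (e e' : a = b) p :
  castT P e p = castT P e' p.
Proof. by rewrite (proof_irrelevance _ e e'). Qed.

Lemma castT_id (O : Type) (P : O -> Type) (a : O) (e : a = a) p : castT P e p = p.
Proof. by rewrite (proof_irrelevance _ e erefl). Qed.

Lemma castT_trans (O : Type) (P : O -> Type) (a b c : O) (e1 : a = b) (e2 : b = c) p :
  castT P e2 (castT P e1 p) = castT P (etrans e1 e2) p.
Proof. by destruct e2, e1. Qed.

Lemma castT_fam (O O' : Type) (P : O' -> Type) (h : O -> O') (a b : O) (e : a = b) p :
  castT (fun c => P (h c)) e p = castT P (f_equal h e) p.
Proof. by destruct e. Qed.

Lemma castT_dep (O O' : Type) (P : O' -> Type) (h : O -> O') (F : forall c, P (h c))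
  (a b : O) (e : a = b) : F b = castT P (f_equal h e) (F a).
Proof. by destruct e. Qed.

Lemma castHom_pi (O : Type) (H : O -> O -> Type) (x x' y y' : O)
  (e1 e1' : x = x') (e2 e2' : y = y') f :
  castHom H e1 e2 f = castHom H e1' e2' f.
Proof. by rewrite (proof_irrelevance _ e1 e1') (proof_irrelevance _ e2 e2'). Qed.

Lemma castHom_comp (O : Type) (H : O -> O -> Type) (x x' x'' y y' y'' : O)
  (a2 : x = x') (b2 : y = y') (a1 : x' = x'') (b1 : y' = y'') f :
  castHom H a1 b1 (castHom H a2 b2 f) = castHom H (etrans a2 a1) (etrans b2 b1) f.
Proof. by destruct a1, b1, a2, b2. Qed.

Lemma castT_lin (k : comPzRingType) (O : Type) (P : O -> lmodType k) (a b : O) (e : a = b)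
  (c : k) (v w : P a) : castT P e (c *: v + w) = c *: castT P e v + castT P e w.
Proof. by destruct e. Qed.

Lemma castT0 (k : comPzRingType) (O : Type) (P : O -> lmodType k) (a b : O) (e : a = b) :
  castT P e 0 = 0.
Proof. by destruct e. Qed.

Lemma castT_sum (k : comPzRingType) (O : Type) (P : O -> lmodType k) (a b : O) (e : a = b)
  (J : Type) (s : seq J) (F : J -> P a) :
  castT P e (\sum_(j <- s) F j) = \sum_(j <- s) castT P e (F j).
Proof. by destruct e. Qed.

Lemma FinSum_cast (k : comPzRingType) (I O : Type) (P : O -> lmodType k) (a b : O) (e : a = b)
  (t : I -> P a) v : FinSum t v -> FinSum (fun i => castT P e (t i)) (castT P e v).
Proof. by destruct e. Qed.

Lemma castHom0 (k : comPzRingType) (C : kcat k) (x x' y y' : Obj C) (e1 : x = x') (e2 : y = y') :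
  castHom (Hom C) e1 e2 0 = 0.
Proof. by destruct e1, e2. Qed.

Section Grp.
Variable G : group.
Implicit Types a b c : G.
Lemma gmulVr a : gmul a (ginv a) = gone.
Proof.
rewrite -[gmul a _]gmul1l -(gmulVl (ginv a)) -gmulA (gmulA (ginv a)) gmulVl gmul1l.
by rewrite gmulVl.
Qed.
Lemma gmul1r a : gmul a gone = a.
Proof. by rewrite -(gmulVl a) gmulA gmulVr gmul1l. Qed.
Lemma gmulI a b c : gmul a b = gmul a c -> b = c.
Proof. by move=> E; rewrite -[b]gmul1l -(gmulVl a) -gmulA E gmulA gmulVl gmul1l. Qed.
Lemma gmulIr a b c : gmul b a = gmul c a -> b = c.
Proof. by move=> E; rewrite -[b]gmul1r -(gmulVr a) gmulA E -gmulA gmulVr gmul1r. Qed.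
Lemma ginvK a : ginv (ginv a) = a.
Proof. by apply: (@gmulI (ginv a)); rewrite gmulVr gmulVl. Qed.
Lemma ginv_inj a b : ginv a = ginv b -> a = b.
Proof. by move=> E; rewrite -(ginvK a) E ginvK. Qed.
Lemma gmulKV a b : gmul a (gmul (ginv a) b) = b.
Proof. by rewrite gmulA gmulVr gmul1l. Qed.
Lemma gmulVK a b : gmul (ginv a) (gmul a b) = b.
Proof. by rewrite gmulA gmulVl gmul1l. Qed.
Lemma gmulrVK a b : gmul (gmul b (ginv a)) a = b.
Proof. by rewrite -gmulA gmulVl gmul1r. Qed.
End Grp.

Unset Implicit Arguments.

Section Main.
Variables (k : comPzRingType) (G : group) (C : kcat k) (A : Gaction G C).
Variable actM : forall (al be : G) x, act A be (act A al x) = act A (gmul be al) x.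
Variable act1 : forall x, act A gone x = x.
Hypothesis amap_lin : forall (al : G) x y (a : k) (f f' : Hom C x y),
  amap A al (a *: f + f') = a *: amap A al f + amap A al f'.
Hypothesis amap_id : forall (al : G) x, amap A al (idm x) = idm (act A al x).
Hypothesis amap1 : forall x y (f : Hom C x y),
  amap A gone f = castHom (Hom C) (esym (act1 x)) (esym (act1 y)) f.
Hypothesis amapM : forall (al be : G) x y (f : Hom C x y),
  amap A be (amap A al f)
  = castHom (Hom C) (esym (actM al be x)) (esym (actM al be y)) (amap A (gmul be al) f).

Lemma amap0 (al : G) x y : amap A al (0 : Hom C x y) = 0.
Proof.
have := amap_lin al x y 1 0 0; rewrite !scale1r addr0 => E.
by apply: (@addrI _ (amap A al (0 : Hom C x y))); rewrite -E addr0.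
Qed.

Lemma amap_castHom (ga : G) (x x' y y' : Obj C) (e1 : x = x') (e2 : y = y') (f : Hom C x y) :
  amap A ga (castHom (Hom C) e1 e2 f)
  = castHom (Hom C) (f_equal (act A ga) e1) (f_equal (act A ga) e2) (amap A ga f).
Proof. by destruct e1, e2. Qed.

Lemma amap_idx (a b : G) (e : a = b) x y (f : Hom C x y) :
  amap A b f = castHom (Hom C) (f_equal (fun c => act A c x) e)
                 (f_equal (fun c => act A c y) e) (amap A a f).
Proof. by destruct e. Qed.

Section Mod.
Variables (M : rmod C) (HM : is_rmod M).

Lemma mmapv0 x y (f : Hom C x y) : mmap M f 0 = 0.
Proof.
case: HM => H _ _ _; have := H x y f 1 0 0; rewrite !scale1r addr0 => E.
by apply: (@addrI _ (mmap M f 0)); rewrite -E addr0.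
Qed.

Lemma mmapD x y (f : Hom C x y) v w : mmap M f (v + w) = mmap M f v + mmap M f w.
Proof. case: HM => H _ _ _; by have := H x y f 1 v w; rewrite !scale1r. Qed.

Lemma mmapZ x y (f : Hom C x y) a v : mmap M f (a *: v) = a *: mmap M f v.
Proof. case: HM => H _ _ _; by have := H x y f a v 0; rewrite !addr0 mmapv0 addr0. Qed.

Lemma mmap0f x y (v : mob M y) : mmap M (0 : Hom C x y) v = 0.
Proof.
case: HM => _ H _ _; have := H x y 1 0 0 v; rewrite !scale1r addr0 => E.
by apply: (@addrI _ (mmap M (0 : Hom C x y) v)); rewrite -E addr0.
Qed.

Lemma mmap_sum x y (f : Hom C x y) (J : Type) (s : seq J) (F : J -> mob M y) :
  mmap M f (\sum_(j <- s) F j) = \sum_(j <- s) mmap M f (F j).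
Proof.
elim: s => [|a s IH]; first by rewrite !big_nil mmapv0.
by rewrite !big_cons mmapD IH.
Qed.

Lemma mmap_cast (x x' y y' : Obj C) (e1 : x = x') (e2 : y = y') (f : Hom C x y) (v : mob M y') :
  mmap M (castHom (Hom C) e1 e2 f) v
  = castT (mob M) e1 (mmap M f (castT (mob M) (esym e2) v)).
Proof. by destruct e1, e2. Qed.

Lemma mmap_idcast (a b : Obj C) (e : a = b) (w : mob M b) :
  mmap M (castHom (Hom C) (erefl a) e (idm a)) w = castT (mob M) (esym e) w.
Proof. destruct e; case: HM => _ _ H _; exact: H. Qed.

Lemma PD_ext z (v w : PD A M z) : (forall al, sval v al = sval w al) -> v = w.
Proof.
case: v => v Hv; case: w => w Hw /= H.
have E := functional_extensionality_dep _ _ H; subst w.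
by rewrite (proof_irrelevance _ Hv Hw).
Qed.

Definition dfun z (ga : G) (w : mob M (act A ga z)) : forall al : G, mob M (act A al z) :=
  fun al => match geqd ga al with
            | left e => castT (fun b => mob M (act A b z)) e w
            | right _ => 0 end.

Lemma dfun_supp z ga w : exists s : seq G, forall al, ~ List.In al s -> dfun z ga w al = 0.
Proof.
exists [:: ga] => al Hal; rewrite /dfun; case: geqd => // e.
by exfalso; apply: Hal; left.
Qed.

Definition delta z ga w : PD A M z := exist _ (dfun z ga w) (dfun_supp z ga w).

Lemma dfun_self z ga w : dfun z ga w ga = w.
Proof. by rewrite /dfun; case: geqd => // e; rewrite castT_id. Qed.

Lemma dfun_ne z ga w al : ga <> al -> dfun z ga w al = 0.
Proof. by rewrite /dfun; case: geqd. Qed.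

Lemma dfun0 z ga al : dfun z ga 0 al = 0.
Proof. by rewrite /dfun; case: geqd => // e; rewrite castT0. Qed.

Lemma dfun_lin z ga a v w al :
  dfun z ga (a *: v + w) al = a *: dfun z ga v al + dfun z ga w al.
Proof. by rewrite /dfun; case: geqd => [e|_]; [rewrite castT_lin | rewrite scaler0 addr0]. Qed.

Definition Tf x y (c : G) (g : Hom C x (act A c y)) (v : PD A M y) :
  forall al : G, mob M (act A al x) :=
  fun al => mmap M (castHom (Hom C) (erefl _) (actM c al y) (amap A al g)) (sval v (gmul al c)).

Lemma Tf_supp x y c g v : exists s : seq G, forall al, ~ List.In al s -> Tf x y c g v al = 0.
Proof.
case: (svalP v) => t Ht.
exists (map (fun b => gmul b (ginv c)) t) => al Hal; rewrite /Tf Ht ?mmapv0 // => Hin.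
apply: Hal; apply/In_smap; exists (gmul al c); split=> //.
by rewrite -gmulA gmulVr gmul1r.
Qed.

Definition T x y c g v : PD A M x := exist _ (Tf x y c g v) (Tf_supp x y c g v).
End Mod.

Definition hfun x y (c : G) (g : Hom C x (act A c y)) :
  forall al be : G, Hom C (act A al x) (act A be y) :=
  fun al be => match geqd (gmul al c) be with
    | left e => castHom (Hom C) (erefl _)
                  (etrans (actM c al y) (f_equal (fun b => act A b y) e)) (amap A al g)
    | right _ => 0 end.

Lemma hfun_ok x y c g :
  [/\ (forall be : G, exists s : list G, forall al, ~ List.In al s -> hfun x y c g al be = 0),
      (forall al : G, exists s : list G, forall be, ~ List.In be s -> hfun x y c g al be = 0) &
      (forall ga al be : G,
         hfun x y c g (gmul ga al) (gmul ga be)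
         = castHom (Hom C) (actM al ga x) (actM be ga y) (amap A ga (hfun x y c g al be)))].
Proof.
split.
- move=> be; exists [:: gmul be (ginv c)] => al Hal; rewrite /hfun; case: geqd => // e.
  by exfalso; apply: Hal; left; rewrite -e -gmulA gmulVr gmul1r.
- move=> al; exists [:: gmul al c] => be Hbe; rewrite /hfun; case: geqd => // e.
  by exfalso; apply: Hbe; left.
- move=> ga al be; rewrite /hfun.
  case: (geqd (gmul (gmul ga al) c) (gmul ga be)) => [e1|n1];
    case: (geqd (gmul al c) be) => [e2|n2].
  + subst be; rewrite amap_castHom amapM !castHom_comp; exact: castHom_pi.
  + by exfalso; apply: n2; apply: (@gmulI _ ga); rewrite gmulA.
  + by exfalso; apply: n1; rewrite -gmulA e2.
  + by rewrite amap0 castHom0.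
Qed.

Definition hR x y c g : rg_hom actM x y := exist _ (hfun x y c g) (hfun_ok x y c g).

Lemma hR_apply (M : rmod C) (HM : is_rmod M) x y c g v al :
  FinSum (fun be => mmap M (sval (hR x y c g) al be) (sval v be)) (sval (T M HM x y c g v) al).
Proof.
have Ht : forall be, be <> gmul al c ->
    mmap M (sval (hR x y c g) al be) (sval v be) = 0.
  move=> be ne; rewrite /= /hfun; case: geqd => [e|_]; first by exfalso; apply: ne.
  exact: mmap0f.
apply: (FinSum_eq (fun i => erefl) _ (FinSum_single Ht)).
rewrite /= /hfun /Tf; case: geqd => [e|ne]; last by exfalso; apply: ne.
by rewrite (castHom_pi _ (erefl _) _ (actM c al y)).
Qed.

Section Nat.
Variables (X Y : rmod C) (HX : is_rmod X) (HY : is_rmod Y).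

Lemma Tnat (u : forall x, PD A X x -> PD A Y x) : is_nat_PD actM X Y u ->
  forall x y c g v al, sval (u x (T X HX x y c g v)) al = sval (T Y HY x y c g (u y v)) al.
Proof.
move=> Hu x y c g v al.
have H1 := (proj2 Hu) x y (hR x y c g) v (T X HX x y c g v) (fun al => hR_apply X HX x y c g v al) al.
exact: (FinSum_unique H1 (hR_apply Y HY x y c g (u y v) al)).
Qed.

Variable u : forall x, PD A X x -> PD A Y x.
Hypothesis Hu : is_nat_PD actM X Y u.

Lemma u_zero z (Z : PD A X z) : (forall al, sval Z al = 0) -> forall be, sval (u z Z) be = 0.
Proof.
move=> HZ be.
have E := (proj1 Hu) z 1 Z Z Z (fun ga => ltac:(by rewrite HZ scaler0 addr0)) be.
rewrite scale1r in E.
by apply: (@addrI _ (sval (u z Z) be)); rewrite -E addr0.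
Qed.

Lemma PDsum_supp (M : rmod C) z (s : seq G) (W : G -> PD A M z) :
  exists t : seq G, forall al, ~ List.In al t -> \sum_(ga <- s) sval (W ga) al = 0.
Proof.
elim: s => [|a s [t Ht]]; first by exists [::] => al _; rewrite big_nil.
case: (svalP (W a)) => ta Hta; exists (ta ++ t) => al Hal.
rewrite big_cons Hta ?Ht ?addr0 // => Hin; apply: Hal; apply: List.in_or_app; auto.
Qed.

Definition PDsum (M : rmod C) z (s : seq G) (W : G -> PD A M z) : PD A M z :=
  exist _ (fun al => \sum_(ga <- s) sval (W ga) al) (PDsum_supp M z s W).

Lemma u_PDsum z s W be :
  sval (u z (PDsum _ z s W)) be = \sum_(ga <- s) sval (u z (W ga)) be.
Proof.
elim: s => [|a s IH].
  by rewrite big_nil; apply: u_zero => al; rewrite /= big_nil.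
have E := (proj1 Hu) z 1 (W a) (PDsum _ z s W) (PDsum _ z (a :: s) W)
            (fun ga => ltac:(by rewrite /= big_cons scale1r)) be.
by rewrite E scale1r IH big_cons.
Qed.

Lemma sum_single_In (V : nmodType) (s : seq G) (t : G -> V) mu :
  List.NoDup s -> List.In mu s -> (forall i, i <> mu -> t i = 0) ->
  \sum_(i <- s) t i = t mu.
Proof.
move=> ND Hin H.
rewrite (@sum_uniq_support _ _ s [:: mu]) //.
- by rewrite big_cons big_nil addr0.
- by constructor => //; constructor.
- by move=> i Hi; apply: H => E; apply: Hi; rewrite E.
- by move=> i Hi; apply: H => E; apply: Hi; left.
Qed.

Lemma Klem z (V : PD A X z) be :
  FinSum (fun mu => sval (u z (delta X z (ginv mu) (sval V (ginv mu)))) be) (sval (u z V) be).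
Proof.
case: (svalP V) => t Ht; have [s0 [ND Hs0]] := nodup_exists t.
have EV : V = PDsum _ z s0 (fun ga => delta X z ga (sval V ga)).
  apply: PD_ext => al /=.
  case: (classic (List.In al s0)) => Hal.
  - rewrite (@sum_single_In _ s0 _ al) //=; first by rewrite dfun_self.
    by move=> i ne; apply: dfun_ne.
  - rewrite Ht; last by rewrite Hs0.
    symmetry; apply: sum_zero_In => i Hi /=; apply: dfun_ne => E; apply: Hal; by rewrite -E.
have -> : sval (u z V) be = \sum_(ga <- s0) sval (u z (delta X z ga (sval V ga))) be.
  by rewrite -u_PDsum -EV.
exists (map ginv s0); split; first by apply: NoDup_smap => // a b; exact: ginv_inj.
split.
- move=> mu Hmu; apply: u_zero => al /=.
  rewrite Ht ?dfun0 // => Hin; apply: Hmu; apply/In_smap; exists (ginv mu); split.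
    by rewrite -Hs0.
  by rewrite ginvK.
- by rewrite big_map; apply: eq_bigr => ga _; rewrite ginvK.
Qed.

Definition fdef (mu : G) (z : Obj C) (w : mob (twist A mu X) z) : mob Y z :=
  castT (mob Y) (act1 z) (sval (u z (delta X z (ginv mu) w)) gone).

Lemma F1_fdef : F1rel actM X Y fdef u.
Proof.
move=> x v be.
have E1 := Tnat u Hu (act A be x) x be (idm (act A be x)) v gone.
rewrite /= /Tf amap_id (mmap_idcast Y HY) in E1.
have K := Klem (act A be x) (T X HX (act A be x) x be (idm (act A be x)) v) gone.
have K' := @FinSum_cast _ _ _ (mob Y) _ _ (act1 (act A be x)) _ _ K.
apply: (FinSum_eq _ _ K').
- by move=> mu; rewrite /fdef /= /Tf amap_id (mmap_idcast X HX).
- rewrite E1 castT_trans.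
  rewrite [RHS](@castT_dep G (Obj C) (mob Y) (fun c => act A c x) (sval (u x v)) _ _ (gmul1l be)).
  exact: (@castT_pi _ (mob Y)).
Qed.

Lemma fdef_nat mu : is_nat (twist A mu X) Y (fdef mu).
Proof.
split.
- move=> z a v w; rewrite /fdef.
  have E := (proj1 Hu) z a (delta X z (ginv mu) v) (delta X z (ginv mu) w)
              (delta X z (ginv mu) (a *: v + w)) (fun ga => dfun_lin X z (ginv mu) a v w ga) gone.
  by rewrite E castT_lin.
- move=> x y g v' /=.
  pose g' := castHom (Hom C) (erefl x) (esym (act1 y)) g.
  have D : delta X x (ginv mu) (mmap X (amap A (ginv mu) g) v')
           = T X HX x y gone g' (delta X y (ginv mu) v').
    apply: PD_ext => al /=; rewrite /Tf.
    rewrite /delta; cbn [proj1_sig].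
    rewrite (@castT_dep G (Obj C) (mob X) (fun c => act A c y) (dfun X y (ginv mu) v') _ _
               (esym (gmul1r al))).
    case: (geqd (ginv mu) al) => [e|ne].
    + subst al; rewrite !dfun_self /g' amap_castHom castHom_comp (mmap_cast X).
      by rewrite castT_trans !castT_id.
    + by rewrite !dfun_ne // castT0 (mmapv0 X HX).
  rewrite /fdef D (Tnat u Hu) /= /Tf amap1 /g' !castHom_comp (mmap_cast Y).
  rewrite castT_trans castT_id.
  rewrite (@castT_dep _ _ (mob Y) (fun c => act A c y) (sval (u y (delta X y (ginv mu) v'))) _ _
             (esym (gmul1l gone))).
  rewrite castT_trans; congr (mmap Y g _); exact: (@castT_pi _ (mob Y)).
Qed.

Lemma lin0 {V W : lmodType k} {h : V -> W} :
  (forall a v w, h (a *: v + w) = a *: h v + h w) -> h 0 = 0.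
Proof.
move=> H; have := H 1 0 0; rewrite !scale1r addr0 => E.
by apply: (@addrI _ (h 0)); rewrite -E addr0.
Qed.

Lemma linD {V W : lmodType k} {h : V -> W} :
  (forall a v w, h (a *: v + w) = a *: h v + h w) -> forall v w, h (v + w) = h v + h w.
Proof. by move=> H v w; have := H 1 v w; rewrite !scale1r. Qed.

Lemma lin_sum {V W : lmodType k} {h : V -> W} :
  (forall a v w, h (a *: v + w) = a *: h v + h w) ->
  forall (J : Type) (r : seq J) (P : pred J) (F : J -> V),
  h (\sum_(j <- r | P j) F j) = \sum_(j <- r | P j) h (F j).
Proof.
move=> H J r P F; elim: r => [|a r IH]; first by rewrite !big_nil (lin0 H).
by rewrite !big_cons; case: (P a); rewrite ?(linD H) IH.
Qed.

Lemma fdef0 mu z : fdef mu z 0 = 0.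
Proof. exact: (lin0 (proj1 (fdef_nat mu) z)). Qed.

Lemma fdef_supp : fg X -> exists s : list G, forall mu, ~ List.In mu s -> forall z w, fdef mu z w = 0.
Proof.
case=> n [xs [e He]].
have Z : forall i, exists s : list G, forall mu, ~ List.In mu s ->
    forall E : xs i = act A (ginv mu) (act A mu (xs i)),
      fdef mu (act A mu (xs i)) (castT (mob X) E (e i)) = 0.
  move=> i.
  pose v := delta X (xs i) gone (castT (mob X) (esym (act1 (xs i))) (e i)).
  case: (svalP (u (xs i) v)) => s Hs; exists s => mu Hmu E.
  have F := F1_fdef (xs i) v mu.
  have Ht : forall nu, nu <> mu ->
      fdef nu (act A mu (xs i))
        (castT (mob X) (esym (actM mu (ginv nu) (xs i))) (sval v (gmul (ginv nu) mu))) = 0.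
    move=> nu ne; rewrite /v /delta; cbn [proj1_sig].
    rewrite dfun_ne ?castT0 ?fdef0 // => E1; apply: ne.
    by rewrite -[nu]gmul1r E1 gmulKV.
  have := FinSum_single_eq Ht F; rewrite Hs // => E2.
  move: E2; rewrite /v /delta; cbn [proj1_sig].
  rewrite (@castT_dep G (Obj C) (mob X) (fun c => act A c (xs i))
             (dfun X (xs i) gone (castT (mob X) (esym (act1 (xs i))) (e i))) _ _
             (esym (gmulVl mu))).
  rewrite dfun_self !castT_trans => ->.
  congr (fdef mu _ _); exact: (@castT_pi _ (mob X)).
pose F i := proj1_sig (constructive_indefinite_description _ (Z i)).
have HF : forall i mu, ~ List.In mu (F i) -> _ := fun i => proj2_sig (constructive_indefinite_description _ (Z i)).
exists (List.flat_map F (enum 'I_n)) => mu Hmu z w.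
have [fs ->] := He _ w.
rewrite (lin_sum (proj1 (fdef_nat mu) z)) big1 // => i _.
pose Ez := etrans (actM (ginv mu) mu z) (etrans (f_equal (fun c => act A c z) (gmulVr mu)) (act1 z)).
pose h := castHom (Hom C) Ez (erefl _) (amap A mu (fs i)).
pose E2 := esym (etrans (actM mu (ginv mu) (xs i))
              (etrans (f_equal (fun c => act A c (xs i)) (gmulVl mu)) (act1 (xs i)))).
have -> : mmap X (fs i) (e i) = mmap X (amap A (ginv mu) h) (castT (mob X) E2 (e i)).
  rewrite /h amap_castHom amapM (amap_idx _ _ (esym (gmulVl mu))) amap1 !castHom_comp (mmap_cast X).
  by rewrite castT_trans !castT_id.
have := (proj2 (fdef_nat mu)) z (act A mu (xs i)) h (castT (mob X) E2 (e i)).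
rewrite /= => ->.
rewrite HF ?(mmapv0 Y HY) // => Hin; apply: Hmu; apply/List.in_flat_map.
exists i; split=> //; apply: In_mem; exact: mem_enum.
Qed.

Lemma part2 : fg X -> exists f, in_dsum_hom A X Y f /\ F1rel actM X Y f u.
Proof.
move=> fgX; exists fdef; split; last exact: F1_fdef.
split; [exact: fdef_nat | exact: fdef_supp].
Qed.
End Nat.

Section Uniq.
Variables (X Y : rmod C) (HX : is_rmod X) (HY : is_rmod Y).

Lemma F1_delta (f : forall mu : G, forall z, mob (twist A mu X) z -> mob Y z)
  (u : forall x, PD A X x -> PD A Y x) :
  in_dsum_hom A X Y f -> F1rel actM X Y f u ->
  forall mu z (w : mob X (act A (ginv mu) (act A gone z))),
  f mu (act A gone z) w
  = sval (u z (delta X z (gmul (ginv mu) gone) (castT (mob X) (actM gone (ginv mu) z) w))) gone.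
Proof.
move=> [Hfn _] Hf mu z w.
have F := Hf z (delta X z (gmul (ginv mu) gone) (castT (mob X) (actM gone (ginv mu) z) w)) gone.
have Ht : forall nu, nu <> mu ->
   f nu (act A gone z)
     (castT (mob X) (esym (actM gone (ginv nu) z))
        (sval (delta X z (gmul (ginv mu) gone) (castT (mob X) (actM gone (ginv mu) z) w))
           (gmul (ginv nu) gone))) = 0.
  move=> nu ne; rewrite /delta; cbn [proj1_sig].
  rewrite dfun_ne ?castT0 ?(lin0 (proj1 (Hfn nu) _)) // => E; apply: ne.
  by apply: ginv_inj; apply: (@gmulIr _ gone).
rewrite (FinSum_single_eq Ht F) /delta; cbn [proj1_sig].
by rewrite dfun_self castT_trans castT_id.
Qed.

Lemma part3 f g u : in_dsum_hom A X Y f -> in_dsum_hom A X Y g ->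
  F1rel actM X Y f u -> F1rel actM X Y g u -> forall mu z w, f mu z w = g mu z w.
Proof.
move=> Hf Hg Ff Fg mu z; rewrite -(act1 z) => w.
by rewrite (F1_delta _ _ Hf Ff) (F1_delta _ _ Hg Fg).
Qed.

Lemma castHom_inv (x x' y y' : Obj C) (e1 : x = x') (e2 : y = y') (f : Hom C x y) g :
  castHom (Hom C) e1 e2 f = g -> f = castHom (Hom C) (esym e1) (esym e2) g.
Proof. by destruct e1, e2 => /= ->. Qed.

Variable f : forall mu : G, forall z, mob (twist A mu X) z -> mob Y z.
Hypothesis Hfn : forall mu, is_nat (twist A mu X) Y (f mu).
Variable s0 : seq G.
Hypothesis ND0 : List.NoDup s0.
Hypothesis Hs0 : forall mu, ~ List.In mu s0 -> forall z w, f mu z w = 0.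

Definition ufun x (v : PD A X x) : forall be : G, mob Y (act A be x) :=
  fun be => \sum_(mu <- s0) f mu (act A be x)
               (castT (mob X) (esym (actM be (ginv mu) x)) (sval v (gmul (ginv mu) be))).

Lemma ufun_supp x v : exists s : seq G, forall be, ~ List.In be s -> ufun x v be = 0.
Proof.
case: (svalP v) => t Ht.
exists (List.flat_map (fun mu => map (gmul mu) t) s0) => be Hbe.
apply: sum_zero_In => mu Hmu.
rewrite Ht ?castT0 ?(lin0 (proj1 (Hfn mu) _)) // => Hin; apply: Hbe.
apply/List.in_flat_map; exists mu; split=> //; apply/In_smap.
by exists (gmul (ginv mu) be); split=> //; rewrite gmulKV.
Qed.

Definition uu x (v : PD A X x) : PD A Y x := exist _ (ufun x v) (ufun_supp x v).

Lemma uu_F1 : F1rel actM X Y f uu.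
Proof.
move=> x v be; exists s0; split=> //; split=> //.
by move=> mu Hmu; apply: Hs0.
Qed.

Lemma uu_nat : is_nat_PD actM X Y uu.
Proof.
split.
- move=> x a v w z Hz ga /=; rewrite /ufun scaler_sumr -big_split.
  apply: eq_bigr => mu _; rewrite Hz castT_lin; exact: (proj1 (Hfn mu)).
- move=> x y h v w Hw al /=.
  case: (svalP h) => _ Hrow Heq.
  have [L HL] := Hrow al; have [L0 [NDL HL0]] := nodup_exists L.
  exists L0; split=> //; split.
    by move=> be Hbe; rewrite HL ?(mmap0f Y HY) // HL0.
  rewrite /ufun.
  under [RHS]eq_bigr => be _ do rewrite (mmap_sum Y HY).
  rewrite exchange_big; apply: eq_bigr => mu _.
  under [RHS]eq_bigr => be _ do rewrite -(proj2 (Hfn mu)).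
  rewrite -(lin_sum (proj1 (Hfn mu) _)); congr (f mu _ _).
  pose ga := ginv mu.
  have E : forall be, mmap X (amap A ga (sval h al be))
              (castT (mob X) (esym (actM be ga y)) (sval v (gmul ga be)))
           = castT (mob X) (esym (actM al ga x))
               (mmap X (sval h (gmul ga al) (gmul ga be)) (sval v (gmul ga be))).
    move=> be; rewrite (castHom_inv _ _ _ _ _ _ _ _ (esym (Heq ga al be))) (mmap_cast X).
    by rewrite castT_trans castT_id.
  rewrite /= (eq_bigr _ (fun be _ => E be)) -castT_sum /ga; apply: (f_equal (castT (mob X) (esym (actM al (ginv mu) x)))).
  case: (Hw (gmul ga al)) => L' [ND' [H' ->]].
  rewrite -(big_map (gmul ga) xpredT (fun b => mmap X (sval h (gmul ga al) b) (sval v b))).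
  apply: sum_uniq_support => //.
  - by apply: NoDup_smap => // a b; exact: gmulI.
  - move=> b Hb; rewrite -(gmulKV ga b) Heq HL ?amap0 ?castHom0 ?(mmap0f X HX) // => Hin.
    apply: Hb; apply/In_smap; exists (gmul (ginv ga) b); split; last by rewrite gmulKV.
    by rewrite -HL0.
Qed.
End Uniq.
End Main.

Theorem mainTheorem6 (k : comPzRingType) (G : group) (C : kcat k) (A : Gaction G C)
  (actM : forall (al be : G) x, act A be (act A al x) = act A (gmul be al) x) :
  is_kcat C -> is_Gaction A actM ->
  forall X Y : rmod C, is_rmod X -> fg X -> is_rmod Y -> fg Y ->
  F1_bijective actM X Y.
Proof.
move=> HC [Hlin Hid Hcomp [act1 Hamap1] HamapM] X Y HX fgX HY fgY.
split.
- move=> f [Hfn [s Hs]].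
  have [s0 [ND Hs0]] := nodup_exists s.
  exists (uu k G C A actM X Y f Hfn s0).
  split; first exact: (uu_nat k G C A actM Hlin X Y HX HY f Hfn s0).
  apply: (uu_F1 k G C A actM X Y f Hfn s0 ND) => mu Hmu; apply: Hs; by rewrite Hs0.
- move=> u Hu; exact: (part2 k G C A actM act1 Hlin Hid Hamap1 HamapM X Y HX HY u Hu fgX).
- move=> f g u Hf Hg Ff Fg; exact: (part3 k G C A actM act1 X Y f g u Hf Hg Ff Fg).
Qed.
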